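(* Let $n\ge 2$, $a\ge\sqrt{n-1}$, $f(x)=a|x^{(1)}|+\sum_{i=2}^n x^{(i)}$ on $\mathbb{R}^n$, and $0<c_1<c_2<1$. Let $x_0\in\mathbb{R}^n$ with $x_0^{(1)}\ne 0$, and define $x_{k+1}=x_k+t_kd_k$ with $d_k=-\nabla f(x_k)$, where the steps $t_k$ satisfy $A(t_k)$ and $W(t_k)$ for all $k=0,1,2,\dots$. Let $S_N=\sum_{k=0}^{N-1}t_k$. Then for every $N\ge1$, $$c_1(a^2+n-1)S_N\le f(x_0)-f(x_N)\le (n-1)S_N+a|x_0^{(1)}|,$$ so that $S_N$ is bounded above as $N\to\infty$ if and only if $f(x_N)$ is bounded below. Furthermore, $f(x_N)$ is bounded below if and only if $x_N$ converges to a point $\bar x$ with $\bar x^{(1)}=0$.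
   Context: $x^{(i)}$ is the $i$-th coordinate. At iteration $k$ (where $f$ is differentiable at $x_k$), the Armijo condition is $A(t)$: $f(x_k+td_k)\le f(x_k)+c_1t\nabla f(x_k)^Td_k$; the Wolfe condition is $W(t)$: $f$ is differentiable at $x_k+td_k$ and $\nabla f(x_k+td_k)^Td_k\ge c_2\nabla f(x_k)^Td_k$. (Wolfe at each step guarantees $f$ is differentiable at every iterate.) *)

(* Defs.v *)
From HB Require Import structures.
From mathcomp Require Import all_boot all_order all_algebra.
From mathcomp Require Import all_classical all_reals all_analysis.
Set Implicit Arguments. Unset Strict Implicit. Unset Printing Implicit Defensive.
Import Order.TTheory GRing.Theory Num.Theory.
Import numFieldNormedType.Exports.
Local Open Scope ring_scope.

(* The first coordinate index x^(1) (index 0 in 'I_n), available as n >= 2. *)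
Definition i1 (n : nat) (hn : (1 < n)%N) : 'I_n := Ordinal (ltnW hn).

Definition fobj (R : realType) (n : nat) (hn : (1 < n)%N) (a : R)
  (x : 'rV[R]_n) : R :=
  a * `|x 0 (i1 hn)| + \sum_(i < n | i != i1 hn) x 0 i.

Definition dotv (R : realType) (n : nat) (u v : 'rV[R]_n) : R :=
  \sum_(i < n) u 0 i * v 0 i.

Definition grad (R : realType) (n : nat) (f : 'rV[R]_n -> R) (x : 'rV[R]_n)
  : 'rV[R]_n := \row_i ('d f x (delta_mx 0 i)).

Definition armijo (R : realType) (n : nat) (f : 'rV[R]_n -> R) (c1 : R)
  (xk dk : 'rV[R]_n) (t : R) : Prop :=
  f (xk + t *: dk) <= f xk + c1 * t * dotv (grad f xk) dk.

Definition wolfe (R : realType) (n : nat) (f : 'rV[R]_n -> R) (c2 : R)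
  (xk dk : 'rV[R]_n) (t : R) : Prop :=
  differentiable f (xk + t *: dk) /\
  dotv (grad f (xk + t *: dk)) dk >= c2 * dotv (grad f xk) dk.

(* Main.v *)
Require Import Defs.
From HB Require Import structures.
From mathcomp Require Import all_boot all_order all_algebra.
From mathcomp Require Import all_classical all_reals all_analysis.
From mathcomp Require Import lra ring.
Import Order.TTheory GRing.Theory Num.Theory.
Import numFieldNormedType.Exports.
Local Open Scope classical_set_scope.
Local Open Scope ring_scope.

Section Aux.
Variables (R : realType) (n : nat) (hn : (1 < n)%N) (a : R).
Local Notation j1 := (i1 hn).
Local Notation f := (fobj hn a).

Lemma fobjE (y : 'rV[R]_n) : f y = a * `|y 0 j1| + ((\sum_i y 0 i) - y 0 j1).
Proof. by rewrite /fobj [X in _ = _ + (X - _)](bigD1 j1) //= addrAC subrr add0r. Qed.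

Lemma entryE (h : R) (j i : 'I_n) (x : 'rV[R]_n) :
  (h *: delta_mx 0 j + x) 0 i = h * (i == j)%:R + x 0 i.
Proof. by rewrite !mxE eqxx. Qed.

Lemma sum_shift (h : R) (j : 'I_n) (x : 'rV[R]_n) :
  \sum_i (h *: delta_mx 0 j + x) 0 i = h + \sum_i x 0 i.
Proof.
under eq_bigr do rewrite entryE.
rewrite big_split /= (bigD1 j) //= eqxx mulr1 big1 ?addr0 // => i /negbTE ->.
by rewrite mulr0.
Qed.

Lemma Dconst (g : 'rV[R]_n -> R) x v c :
  (\forall h \near 0^', h^-1 *: (g (h *: v + x) - g x) = c) ->
  derivable g x v /\ 'D_v g x = c.
Proof.
move=> E.
pose q := fun h : R => h^-1 *: ((g \o shift x) (h *: v) - g x).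
have NE : {near 0^', (fun=> c) =1 q}.
  by near=> h; rewrite /q /= (near E h).
have HC : q @ 0^' --> c.
  exact: cvg_trans (near_eq_cvg NE) (cvg_cst c).
split; first exact: cvgP HC.
exact: cvg_lim HC.
Unshelve. all: by end_near. Qed.

Lemma abs_near (r0 h : R) : r0 != 0 -> `|h| < `|r0| ->
  `|r0 + h| = Num.sg r0 * (r0 + h).
Proof.
move=> r00 hr; have H1 := ler_norm h; have H2 := ler_norm (- h).
rewrite normrN in H2.
case: (ltgtP r0 0) r00 hr => // r0s _.
  rewrite (ltr0_sg r0s) (ltr0_norm r0s) => hr.
  have hneg : r0 + h < 0 by lra.
  by rewrite (ltr0_norm hneg) mulN1r.
rewrite (gtr0_sg r0s) (gtr0_norm r0s) => hr.
have hpos : 0 < r0 + h by lra.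
by rewrite (gtr0_norm hpos) mul1r.
Qed.

Lemma quotE (x : 'rV[R]_n) (j : 'I_n) (h : R) :
  f (h *: delta_mx 0 j + x) - f x =
  a * (`|x 0 j1 + h * (j1 == j)%:R| - `|x 0 j1|) + (h - h * (j1 == j)%:R).
Proof.
rewrite !fobjE sum_shift entryE; rewrite [h * _ + _]addrC; lra.
Qed.

Lemma grad_entry (x : 'rV[R]_n) (j : 'I_n) :
  x 0 j1 != 0 -> differentiable f x ->
  'd f x (delta_mx 0 j) = if j == j1 then a * Num.sg (x 0 j1) else 1.
Proof.
move=> hx dif; rewrite -deriveE //.
suff [] : derivable f x (delta_mx 0 j) /\ 'D_(delta_mx 0 j) f x =
   (if j == j1 then a * Num.sg (x 0 j1) else 1) by [].
apply: Dconst.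
have x0 : 0 < `|x 0 j1| by rewrite normr_gt0.
near=> h.
have hn0 : h != 0 by near: h; exact: nbhs_dnbhs_neq.
have hlt : `|h| < `|x 0 j1| by near: h; exact: dnbhs0_lt.
rewrite quotE eq_sym; case: eqP => _.
  rewrite mulr1 subrr addr0 (abs_near _ _ hx hlt) [`|x 0 j1|]normrEsg.
  rewrite -mulrBr addrC addKr.
  by rewrite /GRing.scale /= mulrC -mulrA mulfK.
rewrite /= mulr0 addr0 subrr mulr0 add0r subr0.
by rewrite /GRing.scale /= mulVf.
Unshelve. all: by end_near. Qed.

Lemma nondiff (x : 'rV[R]_n) : x 0 j1 = 0 -> 0 < a -> ~ differentiable f x.
Proof.
move=> hx a0 dif.
have := @diff_derivable _ _ _ _ _ (delta_mx 0 j1) dif.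
move=> /cvg_ex [l Hl].
move/cvgrPdist_lt: Hl => /(_ a a0) H.
have /nbhs_ballP [e e0 He] : nbhs (0:R) (fun t => t != 0 ->
  `|l - t^-1 *: (f (t *: delta_mx 0 j1 + x) - f x)| < a) := H.
have q t : t != 0 -> t^-1 *: (f (t *: delta_mx 0 j1 + x) - f x) = a * Num.sg t.
  move=> t0; rewrite quotE hx eqxx /= mulr1 subrr addr0 add0r normr0 subr0.
  by rewrite /GRing.scale /= normrEsg mulrC mulrA mulfK.
have e2 : 0 < e / 2 by rewrite divr_gt0.
have hp := He (e / 2). have hm := He (- (e / 2)).
rewrite /ball /= sub0r normrN (gtr0_norm e2) in hp.
rewrite /ball /= sub0r opprK (gtr0_norm e2) in hm.
have hp' := hp ltac:(lra) ltac:(by rewrite gt_eqF).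
have hm' := hm ltac:(lra) ltac:(by rewrite lt_eqF // oppr_lt0).
rewrite q ?gt_eqF // gtr0_sg // mulr1 in hp'.
rewrite q ?lt_eqF ?oppr_lt0 // ltr0_sg ?oppr_lt0 // mulrN1 in hm'.
move: hp' hm'; rewrite !ltr_norml; lra.
Qed.

Lemma diff_abs (r0 : R) : r0 != 0 -> differentiable (fun r : R => a * `|r|) r0.
Proof.
move=> r00; apply/derivable1_diffP.
pose c := a * Num.sg r0.
have dl : derivable (fun r : R => c * r) r0 1.
  apply: diff_derivable.
  have -> : (fun r : R => c * r) = (cst c * id)%R by [].
  by apply: differentiableM.
apply: near_eq_derivable dl.
have r0p : 0 < `|r0| by rewrite normr_gt0.
apply/nbhs_ballP; exists `|r0| => // r; rewrite /ball /= => hr.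
have hr' : `|r - r0| < `|r0| by rewrite distrC.
have := abs_near _ _ r00 hr'; rewrite addrC subrK => ->.
by rewrite /c mulrA.
Qed.

Lemma diffx (x : 'rV[R]_n) : x 0 j1 != 0 -> differentiable f x.
Proof.
move=> hx.
have -> : f = ((fun r : R => a * `|r|) \o (fun y : 'rV[R]_n => y 0 j1)) +
   ((\sum_i (fun y : 'rV[R]_n => y 0 i)) - (fun y : 'rV[R]_n => y 0 j1)).
  by apply/funext => y; rewrite fobjE /= fct_sumE.
apply: differentiableD.
  apply: differentiable_comp; first exact: differentiable_coord.
  exact: diff_abs.
apply: differentiableB; last exact: differentiable_coord.
apply: differentiable_sum => i; exact: differentiable_coord.
Qed.

Lemma sumIf (A B : R) :
  \sum_(i < n) (if i == j1 then A else B) = A + (n%:R - 1) * B.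
Proof.
rewrite (bigD1 j1) //=; congr (_ + _).
rewrite (eq_bigr (fun=> B)); last by move=> i /negbTE ->.
rewrite (eq_bigl (fun i => i \in predC1 j1)) // sumr_const cardC1 card_ord.
rewrite -[LHS]mulr_natr mulrC; congr (_ * _).
by rewrite -{2}(prednK (ltnW hn)) -natr1 addrK.
Qed.

Definition G (x : 'rV[R]_n) : 'rV[R]_n :=
  \row_j (if j == j1 then a * Num.sg (x 0 j1) else 1).

Lemma gradE (x : 'rV[R]_n) : x 0 j1 != 0 -> differentiable f x -> grad f x = G x.
Proof.
by move=> hx dif; apply/rowP => j; rewrite !mxE grad_entry.
Qed.

Lemma dotGG (x y : 'rV[R]_n) : dotv (G y) (- G x) =
  - (a ^+ 2 * (Num.sg (y 0 j1) * Num.sg (x 0 j1)) + (n%:R - 1)).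
Proof.
rewrite /dotv (eq_bigr (fun i => if i == j1 then
   - (a ^+ 2 * (Num.sg (y 0 j1) * Num.sg (x 0 j1))) else -1)).
  by rewrite sumIf; ring.
by move=> i _; rewrite !mxE; case: eqP => _; ring.
Qed.

Lemma stepE (X : 'rV[R]_n) (t : R) i :
  (X + t *: - G X) 0 i = X 0 i - t * (if i == j1 then a * Num.sg (X 0 j1) else 1).
Proof. by rewrite !mxE mulrN. Qed.

Lemma restE (X : 'rV[R]_n) (t : R) :
  \sum_i (X + t *: - G X) 0 i - (X + t *: - G X) 0 j1 =
  \sum_i X 0 i - X 0 j1 - t * (n%:R - 1).
Proof.
rewrite (eq_bigr (fun i => X 0 i - t * (if i == j1 then a * Num.sg (X 0 j1) else 1))).
  by rewrite sumrB -mulr_sumr sumIf stepE eqxx; ring.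
by move=> i _; rewrite stepE.
Qed.

Lemma sg_cases (r : R) : r != 0 -> Num.sg r = 1 \/ Num.sg r = -1.
Proof. by case: sgrP => //; [left|right]. Qed.

Lemma step (X : 'rV[R]_n) (t c1 c2 : R) : 0 < a -> 0 < c1 -> c2 < 1 ->
  X 0 j1 != 0 -> differentiable f X ->
  armijo f c1 X (- grad f X) t -> wolfe f c2 X (- grad f X) t ->
  [/\ (X + t *: - G X) 0 j1 != 0, differentiable f (X + t *: - G X), 0 < t,
      `|(X + t *: - G X) 0 j1| = t * a - `|X 0 j1| &
      f (X + t *: - G X) <= f X - c1 * t * (a ^+ 2 + n%:R - 1) /\
      \sum_i (X + t *: - G X) 0 i - (X + t *: - G X) 0 j1 =
        \sum_i X 0 i - X 0 j1 - t * (n%:R - 1)].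
Proof.
move=> a0 c10 c21 hx dX; rewrite /armijo /wolfe gradE // => A [dY W].
have hY : (X + t *: - G X) 0 j1 != 0.
  by apply/eqP => h0; exact: (nondiff _ h0 a0 dY).
rewrite gradE // !dotGG in W; rewrite dotGG in A.
have n2 : (2:R) <= n%:R by rewrite ler_nat.
have ap : 0 < a ^+ 2 by rewrite exprn_gt0.
have Y1 := stepE X t j1; rewrite eqxx in Y1.
have nY := normrEsg ((X + t *: - G X) 0 j1).
have nX := normrEsg (X 0 j1).
have nYp : 0 < `|(X + t *: - G X) 0 j1| by rewrite normr_gt0.
have nXp : 0 < `|X 0 j1| by rewrite normr_gt0.
move: W A nY nX nYp nXp Y1.
set y1 := (X + t *: - G X) 0 j1; set x1 := X 0 j1.
set fY := f (X + t *: - G X).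
set ny := `|y1|; set nx := `|x1|.
have pos : 0 < (1 - c2) * (a ^+ 2 + (n%:R - 1)).
  by apply: mulr_gt0; lra.
have rE := restE X t.
have [->|->] := sg_cases _ hY; have [->|->] := sg_cases _ hx;
  rewrite ?mul1r ?mulr1 ?mulN1r ?mulrN1 ?opprK => W A nY nX nYp nXp Y1;
  try by exfalso; lra.
all: have ta : 0 < t * a by lra.
all: rewrite pmulr_lgt0 // in ta.
all: split => //; [lra | split => //; lra].
Qed.

End Aux.

Theorem theorem1 (R : realType) (n : nat) (hn : (1 < n)%N) (a c1 c2 : R)
  (x d : nat -> 'rV[R]_n) (t : nat -> R) :
  Num.sqrt (n%:R - 1) <= a ->
  0 < c1 -> c1 < c2 -> c2 < 1 ->
  x 0%N 0 (i1 hn) != 0 ->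
  (forall k, d k = - grad (fobj hn a) (x k)) ->
  (forall k, x k.+1 = x k + t k *: d k) ->
  (forall k, armijo (fobj hn a) c1 (x k) (d k) (t k)) ->
  (forall k, wolfe (fobj hn a) c2 (x k) (d k) (t k)) ->
  let S := fun N : nat => \sum_(0 <= k < N) t k in
  (forall N : nat, (1 <= N)%N ->
     c1 * (a ^+ 2 + n%:R - 1) * S N <= fobj hn a (x 0%N) - fobj hn a (x N)
     /\ fobj hn a (x 0%N) - fobj hn a (x N)
          <= (n%:R - 1) * S N + a * `|x 0%N 0 (i1 hn)|)
  /\ ((exists M : R, forall N, S N <= M) <->
      (exists m : R, forall N, m <= fobj hn a (x N)))
  /\ ((exists m : R, forall N, m <= fobj hn a (x N)) <->
      (exists xbar : 'rV[R]_n, x @ \oo --> xbar /\ xbar 0 (i1 hn) = 0)).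
Proof.
move=> ha c10 c12 c21 hx0 hd hx hA hW S.
set j1 := i1 hn; set f := fobj hn a.
have n2 : (2:R) <= n%:R by rewrite ler_nat.
have a0 : 0 < a.
  apply: lt_le_trans ha; rewrite sqrtr_gt0; lra.
have inv : forall k, x k 0 j1 != 0 /\ differentiable f (x k).
  elim=> [|k [IH1 IH2]]; first by split => //; exact: diffx.
  have := @step R n hn a (x k) (t k) c1 c2 a0 c10 c21 IH1 IH2.
  rewrite -hd => /(_ (hA k) (hW k)).
  have E : x k + t k *: - @G R n hn a (x k) = x k.+1 by rewrite hx hd gradE //; case: (IH1); exact: IH2.
  by rewrite E => -[].
have xs k : x k.+1 = x k + t k *: - @G R n hn a (x k).
  by rewrite hx hd gradE //; case: (inv k).
have st k : [/\ 0 < t k, `|x k.+1 0 j1| = t k * a - `|x k 0 j1|,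
   f (x k.+1) <= f (x k) - c1 * t k * (a ^+ 2 + n%:R - 1) &
   forall i, i != j1 -> x k.+1 0 i = x k 0 i - t k].
  have := @step R n hn a (x k) (t k) c1 c2 a0 c10 c21 (proj1 (inv k)) (proj2 (inv k)).
  rewrite -hd => /(_ (hA k) (hW k)); rewrite -xs => -[_ _ tp ab [ar _]].
  split => // i ij; rewrite xs stepE; move/negbTE: ij => ->; by rewrite mulr1.
have SS N : S N.+1 = S N + t N by rewrite /S big_nat_recr.
have S0 : S 0%N = 0 by rewrite /S big_geq.
pose r (y : 'rV[R]_n) := \sum_i y 0 i - y 0 j1.
have fE y : f y = a * `|y 0 j1| + r y by rewrite /f fobjE.
have rS k : r (x k.+1) = r (x k) - t k * (n%:R - 1).
  by rewrite /r xs restE.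
have tp k : 0 < t k by case: (st k).
have Low N : c1 * (a ^+ 2 + n%:R - 1) * S N <= f (x 0%N) - f (x N).
  elim: N => [|N IH]; first by rewrite S0 mulr0 subrr.
  case: (st N) => _ _ ar _; rewrite SS; lra.
have rN N : r (x N) = r (x 0%N) - S N * (n%:R - 1).
  elim: N => [|N IH]; first by rewrite S0 mul0r subr0.
  rewrite rS IH SS; ring.
have coN N i : i != j1 -> x N 0 i = x 0%N 0 i - S N.
  move=> ij; elim: N => [|N IH]; first by rewrite S0 subr0.
  by case: (st N) => _ _ _ /(_ i ij) ->; rewrite IH SS opprD addrA.
have K0 : 0 < c1 * (a ^+ 2 + n%:R - 1).
  by apply: mulr_gt0 => //; have := exprn_gt0 2 a0; lra.
have P1 : forall N : nat, (1 <= N)%N ->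
     c1 * (a ^+ 2 + n%:R - 1) * S N <= f (x 0%N) - f (x N)
     /\ f (x 0%N) - f (x N) <= (n%:R - 1) * S N + a * `|x 0%N 0 j1|.
  move=> N _; split => //.
  rewrite !fE (rN N); have := mulr_ge0 (ltW a0) (normr_ge0 (x N 0 j1)); lra.
have P2 : (exists M : R, forall N, S N <= M) <->
      (exists m : R, forall N, m <= f (x N)).
  split.
    move=> [M HM]; exists (r (x 0%N) - (n%:R - 1) * M) => N.
    rewrite fE (rN N); have := mulr_ge0 (ltW a0) (normr_ge0 (x N 0 j1)).
    have : 0 <= n%:R - 1 :> R by lra.
    move=> /ler_wpM2l /(_ _ _ (HM N)); lra.
  move=> [m Hm]; exists ((f (x 0%N) - m) / (c1 * (a ^+ 2 + n%:R - 1))) => N.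
  rewrite ler_pdivlMr // mulrC; have := Low N; have := Hm N; lra.
have Sinc : nondecreasing_seq S.
  by apply/nondecreasing_seqP => k; rewrite SS; have := tp k; lra.
split; first exact: P1.
split; first exact: P2.
split.
  move=> hb; have [M HM] := proj2 P2 hb.
  have Sub : has_ubound (range S) by exists M => _ [N _ <-].
  have SL := nondecreasing_cvgn Sinc Sub.
  set L := sup (range S) in SL.
  have tc : t @ \oo --> 0.
    have -> : t = (fun k => S k.+1 - S k) by apply/funext => k; rewrite SS addrC addKr.
    rewrite -(subrr L); apply: cvgB => //.
    by rewrite cvg_shiftS.
  have x1c : (fun N => x N 0 j1) @ \oo --> 0.
    rewrite -cvg_shiftS; apply/cvgrPdist_lt => e e0.
    have ea : 0 < e / a by rewrite divr_gt0.
    move/cvgrPdist_lt: tc => /(_ _ ea) T.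
    near=> k.
    have tk : t k * a < e.
      near: k; apply: filterS T => k.
      by rewrite sub0r normrN (gtr0_norm (tp k)) ltr_pdivlMr.
    rewrite /= sub0r normrN.
    case: (st k) => _ -> _ _; have := normr_ge0 (x k 0 j1); lra.
  pose w : 'rV[R]_n := const_mx 1 - delta_mx 0 j1.
  have xE : x = (fun N => x 0%N + (x N 0 j1 - x 0%N 0 j1) *: delta_mx 0 j1 - S N *: w).
    apply/funext => N; apply/rowP => i; rewrite !mxE /=.
    case: (eqVneq i j1) => [->|ij].
      rewrite ?eqxx -[true%:R]/(1:R); ring.
    rewrite -[false%:R]/(0:R) (coN N i ij); ring.
  exists (x 0%N + (0 - x 0%N 0 j1) *: delta_mx 0 j1 - L *: w); split.
    have HC : (fun N => x 0%N + (x N 0 j1 - x 0%N 0 j1) *: delta_mx 0 j1 - S N *: w)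
       @ \oo --> (x 0%N + (0 - x 0%N 0 j1) *: delta_mx 0 j1 - L *: w).
      apply: cvgB; first apply: cvgD; first exact: cvg_cst.
        by apply: cvgZr_tmp; apply: cvgB => //; exact: cvg_cst.
      exact: cvgZr_tmp.
    by rewrite -xE in HC.
  rewrite !mxE /= ?eqxx; ring.
move=> [xb [Hc _]]; apply/P2.
have j2lt : (1 < n)%N := hn.
pose j2 : 'I_n := Ordinal j2lt.
have j2n : j2 != j1 by [].
have c2' := @continuous_cvg _ _ _ _ _ x (fun M : 'rV[R]_n => M 0 j2) xb
  (@coord_continuous R 1 n 0 j2 xb) Hc.
have c3 : (fun N => x N 0 j2) @ \oo --> xb 0 j2.
  by apply: c2'; typeclasses eauto.
have [N0 _ HN0] := proj1 (cvgrPdist_lt _ _) c3 1 ltr01.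
exists (x 0%N 0 j2 - xb 0 j2 + 1) => N.
have mN : (N <= maxn N N0)%N by rewrite leq_maxl.
have mN0 : (N0 <= maxn N N0)%N by rewrite leq_maxr.
apply: le_trans (Sinc _ _ mN) _.
have := HN0 _ mN0; rewrite /= (coN _ _ j2n) => /ltr_normlW; lra.
Unshelve. all: by end_near.
Qed.
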